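(* Let $A$ be a random real $N\times N$ matrix and $C$ a random vector in $\mathbb{R}^N$ whose $N^2+N$ entries are independent non-singular real random variables. Let $p_1,\dots,p_N\in\mathbb{C}[x]$ be linearly independent polynomials in one variable of degree at most $N-1$. Then $$\mathbb{P}\big(\det(p_1(A)C,\,p_2(A)C,\dots,p_N(A)C)=0\big)=0,$$ i.e. the vectors $p_1(A)C,\dots,p_N(A)C$ are linearly independent almost surely.
   Context: A real random variable $X$ is non-singular if $\mathbb{P}(X=a)=0$ for every $a\in\mathbb{R}$. *)

(* Defs.v *)
From HB Require Import structures.
From mathcomp Require Import all_boot all_order all_algebra.
From mathcomp Require Import all_classical all_reals all_analysis.
From mathcomp Require Import complex.
Set Implicit Arguments. Unset Strict Implicit. Unset Printing Implicit Defensive.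
Import Order.TTheory GRing.Theory Num.Theory.
Local Open Scope classical_set_scope.
Local Open Scope ring_scope.

Definition mutually_independent d (T : measurableType d) (R : realType)
  (P : probability T R) (I : finType) (X : I -> {RV P >-> R}) : Prop :=
  forall (J : {set I}) (B : I -> set R),
    (forall i, measurable (B i)) ->
    P (\bigcap_(i in [set i | i \in J]) (X i @^-1` B i)) =
    (\prod_(i in J) P (X i @^-1` B i))%E.

Definition non_singular d (T : measurableType d) (R : realType)
  (P : probability T R) (X : {RV P >-> R}) : Prop :=
  forall a : R, P (X @^-1` [set a]) = 0%E.

Definition poly_mx_vec (K : nzRingType) (n : nat) (p : {poly K})
  (A : 'M[K]_n) (c : 'cV[K]_n) : 'cV[K]_n :=
  \sum_(k < size p) p`_k *: iter k (mulmx A) c.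

Definition poly_lin_indep (K : nzRingType) (n : nat) (p : 'I_n -> {poly K}) : Prop :=
  forall c : 'I_n -> K, \sum_(i < n) c i *: p i = 0 -> forall i, c i = 0.

(* Main.v *)
Require Import Defs.
From HB Require Import structures.
From mathcomp Require Import all_boot all_order all_algebra.
From mathcomp Require Import all_classical all_reals all_analysis.
From mathcomp Require Import complex.
From mathcomp Require Import zify.
Import Order.TTheory GRing.Theory Num.Theory.
Local Open Scope classical_set_scope.
Local Open Scope ring_scope.
Set Implicit Arguments. Unset Strict Implicit. Unset Printing Implicit Defensive.
Section PolL.
Variables (R : realType) (I : finType).

Fixpoint PolL (s : seq I) (f : (I -> R) -> R) : Prop :=
  if s is i :: s' then
    exists m (g : nat -> (I -> R) -> R), (forall k, PolL s' (g k)) /\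
      forall x, f x = \sum_(k < m) g k x * x i ^+ k
  else exists c, forall x, f x = c.

Lemma PolL_ext s f g : PolL s f -> (forall x, f x = g x) -> PolL s g.
Proof.
case: s => [|i s] /=.
  by move=> [c Hc] E; exists c => x; rewrite -E.
by move=> [m [h [Hh E1]]] E; exists m, h; split => // x; rewrite -E.
Qed.

Lemma PolL_cst s c : PolL s (fun _ => c).
Proof.
elim: s c => [|i s IH] c /=; first by exists c.
exists 1%N, (fun _ _ => c); split => // x.
by rewrite big_ord1 expr0 mulr1.
Qed.

Lemma pad_sum (m M : nat) (c : nat -> R) z : (m <= M)%N ->
  \sum_(k < M) (if (k < m)%N then c k else 0) * z ^+ k = \sum_(k < m) c k * z ^+ k.
Proof.
move=> mM; rewrite [RHS](big_ord_widen M (fun k => c k * z ^+ k) mM).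
rewrite [RHS]big_mkcond /=.
by apply: eq_bigr => k _; case: ifP; rewrite ?mul0r.
Qed.

Lemma PolL_if s (b : bool) f : PolL s f -> PolL s (if b then f else (fun _ => 0)).
Proof. by case: b => // _; exact: PolL_cst. Qed.

Lemma PolL_add s f g : PolL s f -> PolL s g -> PolL s (fun x => f x + g x).
Proof.
elim: s f g => [|i s IH] f g /=.
  by move=> [c Hc] [c' Hc']; exists (c + c') => x; rewrite Hc Hc'.
move=> [m [h [Hh Ef]]] [m' [h' [Hh' Eg]]].
exists (m + m')%N, (fun k x => (if (k < m)%N then h k else (fun _ => 0)) x +
                            (if (k < m')%N then h' k else (fun _ => 0)) x).
split; first by move=> k; apply: IH; apply: PolL_if.
move=> x; rewrite Ef Eg.
rewrite -(@pad_sum m (m + m') (fun k => h k x) (x i) (leq_addr m' m)).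
rewrite -(@pad_sum m' (m + m') (fun k => h' k x) (x i) (leq_addl m m')).
rewrite -big_split /=; apply: eq_bigr => k _.
by rewrite -mulrDl; congr (_ * _); case: ifP; case: ifP.
Qed.

Lemma PolL_mul s f g : PolL s f -> PolL s g -> PolL s (fun x => f x * g x).
Proof.
elim: s f g => [|i s IH] f g /=.
  by move=> [c Hc] [c' Hc']; exists (c * c') => x; rewrite Hc Hc'.
move=> [m [h [Hh Ef]]] [m' [h' [Hh' Eg]]].
pose a k := if (k < m)%N then h k else (fun _ : I -> R => 0).
pose b k := if (k < m')%N then h' k else (fun _ : I -> R => 0).
have PS : forall (n : nat) (F : nat -> (I -> R) -> R), (forall j, PolL s (F j)) ->
    PolL s (fun x => \sum_(j < n) F j x).
  move=> n F HF; elim: n => [|n IHn].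
    by apply: (PolL_ext (PolL_cst s 0)) => x; rewrite big_ord0.
  apply: (PolL_ext (PolL_add IHn (HF n))) => x.
  by rewrite big_ord_recr /=.
exists (m + m')%N, (fun n x => \sum_(j < n.+1) a j x * b (n - j)%N x).
split.
  move=> n; apply: (PS n.+1 (fun j x => a j x * b (n - j)%N x)) => j.
  by apply: IH; apply: PolL_if.
move=> x; rewrite Ef Eg.
pose p1 := \poly_(k < m) h k x; pose p2 := \poly_(k < m') h' k x.
have ha k : p1`_k = a k x by rewrite coef_poly /a; case: ifP.
have hb k : p2`_k = b k x by rewrite coef_poly /b; case: ifP.
have -> : \sum_(k < m) h k x * x i ^+ k = p1.[x i].
  by rewrite horner_poly.
have -> : \sum_(k < m') h' k x * x i ^+ k = p2.[x i].
  by rewrite horner_poly.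
rewrite -hornerM.
have -> : p1 * p2 = \poly_(n < m + m') (\sum_(j < n.+1) a j x * b (n - j)%N x).
  apply/polyP => n; rewrite coef_poly coefM.
  case: ifP => nm.
    by apply: eq_bigr => j _; rewrite ha hb.
  apply: big1 => j _; rewrite ha hb /a /b.
  case: ifP => jm; last by rewrite mul0r.
  case: ifP => jm'; last by rewrite mulr0.
  exfalso; move: nm (ltn_ord j) jm jm' => /negbT; rewrite -leqNgt => nm jn jm jm'.
  lia.
by rewrite horner_poly.
Qed.

End PolL.
Section PolL2.
Variables (R : realType) (I : finType).
Local Notation PolL := (@PolL R I).

Lemma PolL_var s j : j \in s -> PolL s (fun x => x j).
Proof.
elim: s => [//|i s IH] /=; rewrite in_cons => /orP [/eqP ->|js].
  exists 2%N, (fun k _ => (k == 1%N)%:R); split; first by move=> k; exact: PolL_cst.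
  by move=> x; rewrite !big_ord_recr big_ord0 /= add0r mul0r add0r mul1r expr1.
exists 1%N, (fun _ x => x j); split; first by move=> _; exact: IH.
by move=> x; rewrite big_ord1 expr0 mulr1.
Qed.

Lemma PolL_sum s (J : Type) (r : seq J) (Pr : pred J) (F : J -> (I -> R) -> R) :
  (forall t, PolL s (F t)) -> PolL s (fun x => \sum_(t <- r | Pr t) F t x).
Proof.
move=> HF; elim: r => [|t r IH].
  by apply: (PolL_ext (@PolL_cst R I s 0)) => x; rewrite big_nil.
case Pt: (Pr t).
  by apply: (PolL_ext (PolL_add (HF t) IH)) => x; rewrite big_cons Pt.
by apply: (PolL_ext IH) => x; rewrite big_cons Pt.
Qed.

Lemma PolL_prod s (J : Type) (r : seq J) (Pr : pred J) (F : J -> (I -> R) -> R) :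
  (forall t, PolL s (F t)) -> PolL s (fun x => \prod_(t <- r | Pr t) F t x).
Proof.
move=> HF; elim: r => [|t r IH].
  by apply: (PolL_ext (@PolL_cst R I s 1)) => x; rewrite big_nil.
case Pt: (Pr t).
  by apply: (PolL_ext (PolL_mul (HF t) IH)) => x; rewrite big_cons Pt.
by apply: (PolL_ext IH) => x; rewrite big_cons Pt.
Qed.

Lemma PolL_local s f : PolL s f ->
  forall x y, (forall j, j \in s -> x j = y j) -> f x = f y.
Proof.
elim: s f => [|i s IH] f /=.
  by move=> [c Hc] x y _; rewrite !Hc.
move=> [m [g [Hg Ef]]] x y Exy; rewrite !Ef Exy ?mem_head //.
apply: eq_bigr => k _; congr (_ * _); apply: (IH _ (Hg k)) => j js.
by apply: Exy; rewrite in_cons js orbT.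
Qed.

Lemma PolL_measurable d (T' : measurableType d) (Y : I -> T' -> R) s f :
  PolL s f -> (forall j, j \in s -> measurable_fun setT (Y j)) ->
  measurable_fun setT (fun w => f (fun j => Y j w)).
Proof.
elim: s f => [|i s IH] f /=.
  move=> [c Hc] _.
  have -> : (fun w => f (fun j => Y j w)) = cst c by apply/funext => w; rewrite Hc.
  exact: measurable_cst.
move=> [m [g [Hg Ef]]] HY.
have -> : (fun w => f (fun j => Y j w)) =
    (fun w => \sum_(k < m) g k (fun j => Y j w) * Y i w ^+ k).
  by apply/funext => w; rewrite Ef.
apply: measurable_sum => k; apply: measurable_realfun.measurable_funM.
  apply: IH => // j js; apply: HY; by rewrite in_cons js orbT.
by apply: measurable_realfun.measurable_funX; apply: HY; rewrite mem_head.
Qed.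

End PolL2.
Section Restr.
Variables (R : realType) (d : measure_display) (T : measurableType d)
  (P : probability T R) (G : set (set T)).
Hypothesis GM : G `<=` measurable.

Lemma sub_GM : <<s G >> `<=` measurable.
Proof. exact: smallest_sub (sigma_algebra_measurable T) GM. Qed.

Definition Pres (GM' : G `<=` measurable) := (fun A : set (g_sigma_algebraType G) => P A).


Let Pres0 : Pres GM set0 = 0%E.
Proof. exact: measure0. Qed.

Let Pres_ge0 A : (0 <= Pres GM A)%E.
Proof. exact: measure_ge0. Qed.

Let Pres_sa : semi_sigma_additive (Pres GM).
Proof.
move=> F mF tF mU; apply: (@measure_semi_sigma_additive _ _ _ P F).
- by move=> n; apply: sub_GM; exact: mF.
- exact: tF.
- exact: sub_GM.
Qed.

HB.instance Definition _ := isMeasure.Build _ _ _ (@Pres GM) Pres0 Pres_ge0 Pres_sa.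

End Restr.

Lemma mpre d d' (T1 : measurableType d) (T2 : measurableType d') (f : T1 -> T2) B :
  measurable_fun setT f -> measurable B -> measurable (f @^-1` B).
Proof. by move=> mf mB; rewrite -[X in measurable X]setTI; exact: mf. Qed.

Section Roots.
Variables (R : realType) (d : measure_display) (T : measurableType d)
  (P : probability T R) (Z : {RV P >-> R}).
Hypothesis nsZ : non_singular Z.

Lemma measurable_roots (Q : {poly R}) : measurable [set z : R | Q.[z] = 0].
Proof.
have -> : [set z : R | Q.[z] = 0] = (fun z => \sum_(k < size Q) Q`_k * z ^+ k) @^-1` [set 0].
  by apply/seteqP; split => z /=; rewrite horner_coef.
apply: mpre; last exact: measurable_set1.
apply: measurable_sum => k; apply: measurable_realfun.measurable_funM.
  exact: measurable_cst.
exact: measurable_realfun.measurable_funX.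
Qed.

Lemma roots_null (Q : {poly R}) : Q != 0 ->
  distribution P Z [set z | Q.[z] = 0] = 0%E.
Proof.
have [n] := ubnP (size Q); elim: n Q => // n IH Q szQ Q0.
have [[a Ha]|Hno] := pselect (exists a, root Q a); last first.
  have -> : [set z | Q.[z] = 0] = set0.
    by apply/seteqP; split => z //= Qz; apply: Hno; exists z; apply/rootP.
  exact: measure0.
have /factor_theorem [Q' EQ] := Ha.
have Q'0 : Q' != 0 by apply: contraNneq Q0 => Q'0; rewrite EQ Q'0 mul0r.
have szQ' : (size Q' < n)%N.
  move: szQ; rewrite EQ size_mul ?polyXsubC_eq0 // size_XsubC addn2 /=.
  by rewrite ltnS.
apply/eqP; rewrite eq_le measure_ge0 andbT.
apply: (@le_trans _ _ (distribution P Z ([set a] `|` [set z | Q'.[z] = 0]))).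
  apply: le_measure; rewrite ?inE.
  - exact: measurable_roots.
  - by apply: measurableU; [exact: measurable_set1|exact: measurable_roots].
  move=> z /=; rewrite EQ hornerM hornerXsubC => /eqP; rewrite mulf_eq0 subr_eq0.
  by case/orP => /eqP ->; [right|left].
apply: (@le_trans _ _ (distribution P Z [set a] + distribution P Z [set z | Q'.[z] = 0%R])%E).
  exact: (measureU2 (distribution P Z) (measurable_set1 a) (measurable_roots Q')).
rewrite (IH Q') // adde0.
by rewrite /distribution /pushforward nsZ.
Qed.

End Roots.
Section Key.
Variables (R : realType) (I : finType) (d : measure_display) (T : measurableType d)
  (P : probability T R) (X : I -> {RV P >-> R}).
Hypothesis indep : mutually_independent X.

Variables (i : I) (s' : seq I).
Hypothesis is' : i \notin s'.

Let JS : {set I} := [set j | j \in s'].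

Definition Pi := [set E : set T | exists B : I -> set R, (forall j, measurable (B j)) /\
   E = \bigcap_(j in [set j | j \in JS]) (X j @^-1` B j)].

Lemma Pi_meas : Pi `<=` measurable.
Proof.
move=> _ [B [mB ->]]; apply: fin_bigcap_measurable; first exact: finite_finset.
by move=> j _; apply: measurable_funPTI.
Qed.

Let Pi_setI : setI_closed Pi.
Proof.
move=> _ _ [B [mB ->]] [C [mC ->]]; exists (fun j => B j `&` C j); split.
  by move=> j; apply: measurableI.
by apply/seteqP; split => w /=; [move=> [H1 H2] j Jj; split; [exact: H1|exact: H2]
   |move=> H; split => j Jj; have [] := H j Jj].
Qed.

Let Pi_T : Pi setT.
Proof.
exists (fun _ => setT); split => //.
by apply/seteqP; split => w //= _ j _.
Qed.

Let indep_gen B0 E : measurable B0 -> Pi E ->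
  P (X i @^-1` B0 `&` E) = (P (X i @^-1` B0) * P E)%E.
Proof.
move=> mB0 [B [mB ->]].
have iJS : i \notin JS by rewrite inE.
pose B' j := if j == i then B0 else B j.
have mB' j : measurable (B' j) by rewrite /B'; case: ifP.
have E1 : X i @^-1` B0 `&` \bigcap_(j in [set j | j \in JS]) X j @^-1` B j =
     \bigcap_(j in [set j | j \in i |: JS]) X j @^-1` B' j.
  apply/seteqP; split => w /=.
    move=> [H0 H] j; rewrite /mkset in_setU1 => /orP [/eqP ->|Jj].
      by rewrite /B' eqxx.
    have ji : j != i by apply: contraNneq iJS => <-.
    by rewrite /B' (negbTE ji); apply: H.
  move=> H; split.
    by have := H i; rewrite /mkset in_setU1 eqxx /B' eqxx; apply.
  move=> j Jj; have ji : j != i by apply: contraNneq iJS => <-.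
  by have := H j; rewrite /mkset in_setU1 Jj orbT /B' (negbTE ji); apply.
rewrite E1 indep // big_setU1 //= /B' eqxx; congr (_ * _)%E.
rewrite indep //; apply: eq_bigr => j Jj.
have ji : j != i by apply: contraNneq iJS => <-.
by rewrite (negbTE ji).
Qed.

Definition TPi := g_sigma_algebraType Pi.

Lemma indep_sigma B0 (E : set TPi) : measurable B0 -> <<s Pi >> E ->
  P (X i @^-1` B0 `&` E) = (P (X i @^-1` B0) * P E)%E.
Proof.
move=> mB0; move: E.
apply: (@dynkin_induction _ TPi Pi
  (fun E => P (X i @^-1` B0 `&` E) = (P (X i @^-1` B0) * P E)%E)) => //.
- by rewrite setIT probability_setT mule1.
- by move=> E PiE; apply: indep_gen.
- move=> S mS HS.
  have mST : measurable (S : set T) := sub_GM Pi_meas mS.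
  have mA : measurable (X i @^-1` B0) := measurable_funPTI (X i) mB0.
  have fa : P (X i @^-1` B0) \is a fin_num := fin_num_measure P _ mA.
  have fs : P S \is a fin_num := fin_num_measure P _ mST.
  rewrite -setDE (measureD mA mST) ?HS ?probability_setC //; last by rewrite ltey_eq fa.
  rewrite muleBr ?mule1 //.
  by congr (_ - _)%E; exact: HS.
- move=> F mF tF HF.
  have mFT n : measurable (F n : set T) := sub_GM Pi_meas (mF n).
  have mA : measurable (X i @^-1` B0) := measurable_funPTI (X i) mB0.
  have fa : P (X i @^-1` B0) \is a fin_num := fin_num_measure P _ mA.
  rewrite setI_bigcupr.
  have mAF : forall k, [set: nat] k -> measurable (X i @^-1` B0 `&` F k).
    by move=> k _; apply: measurableI.
  rewrite (measure_bigcup P [set: nat] (fun k => X i @^-1` B0 `&` F k) mAF); last first.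
    exact: trivIset_setIl.
  rewrite (measure_bigcup P [set: nat] F) //.
  transitivity (\big[+%E/0%E]_(0 <= n <oo | n \in [set: nat]) (P (X i @^-1` B0) * P (F n)))%E.
    by apply: eq_eseriesr => n _; exact: HF.
  by rewrite -(fineK fa) nneseriesZl // => n _; apply: measure_ge0.
Qed.

Definition psi (w : T) : (R * TPi)%type := (X i w, w).

Lemma mpsi : measurable_fun setT psi.
Proof.
apply: measurable_fun_pair; first exact: measurable_funPT.
by move=> _ A mA; rewrite setTI; exact: (sub_GM Pi_meas mA).
Qed.

HB.instance Definition _ := isMeasurableFun.Build _ _ _ _ psi mpsi.

Lemma law (A : set (R * TPi)%type) : measurable A ->
  distribution P psi A = (distribution P (X i) \x^ Pres P Pi_meas)%E A.
Proof.
move=> mA.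
apply: (measure_unique [set A1 `*` B1 | A1 in measurable & B1 in measurable] (fun _ => setT)) => //.
- exact: measurable_prod_measurableType.
- move=> _ _ [A1 mA1 [B1 mB1 <-]] [A2 mA2 [B2 mB2 <-]]; rewrite -setXI.
  by exists (A1 `&` A2); [exact: measurableI|exists (B1 `&` B2) => //; exact: measurableI].
- by move=> _; exists setT => //; exists setT => //; rewrite setXTT.
- by rewrite bigcup_const.
- move=> _ [A1 mA1 [B1 mB1 <-]].
  change (P (psi @^-1` (A1 `*` B1)) = ((distribution P (X i) \x^ Pres P Pi_meas) (A1 `*` B1))%E).
  rewrite product_measure2E //.
  change (distribution P (X i) A1) with (P (X i @^-1` A1)).
  have -> : psi @^-1` (A1 `*` B1) = X i @^-1` A1 `&` B1 by [].
  exact: indep_sigma.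
- move=> _; change (P (psi @^-1` setT) < +oo)%E.
  by rewrite preimage_setT probability_setT ltry.
Qed.

End Key.
Section Key2.
Variables (R : realType) (I : finType) (d : measure_display) (T : measurableType d)
  (P : probability T R) (X : I -> {RV P >-> R}).
Hypothesis indep : mutually_independent X.
Variables (i : I) (s' : seq I).
Hypothesis is' : i \notin s'.
Hypothesis nsi : non_singular (X i).

Local Notation TPi := (TPi X s').
Local Notation psi := (psi X i s').

Lemma Xj_meas j : j \in s' -> measurable_fun (T := TPi) setT (fun w : TPi => X j w).
Proof.
move=> js _ B mB; rewrite setTI; apply: sub_sigma_algebra.
exists (fun l => if l == j then B else setT); split.
  by move=> l; case: ifP.
apply/seteqP; split => w /=.
  by move=> Bw l _; case: eqP => // ->.
by move=> H; have := H j; rewrite /mkset inE js eqxx; apply.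
Qed.

Lemma key (m : nat) (q : nat -> (I -> R) -> R) (k0 : 'I_m) :
  (forall k, PolL s' (q k)) ->
  P [set w | q k0 (fun j => X j w) != 0 /\
             \sum_(k < m) q k (fun j => X j w) * X i w ^+ k = 0] = 0%E.
Proof.
move=> Hq.
pose Y j (p : (R * TPi)%type) : R := if j == i then p.1 else X j p.2.
pose fs (x : I -> R) := \sum_(k < m) q k x * x i ^+ k.
have Pfs : PolL (i :: s') fs by exists m, q.
have mY : forall j, j \in i :: s' -> measurable_fun setT (Y j).
  move=> j; rewrite in_cons /Y; case: eqP => [_ _|_ /= js].
    exact: measurable_fst.
  apply: measurableT_comp; last exact: measurable_snd.
  exact: Xj_meas.
have q_loc : forall k p, q k (fun j => Y j p) = q k (fun j => X j p.2).
  move=> k p; apply: (PolL_local (Hq k)) => j js; rewrite /Y; case: eqP => // ji.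
  by move: is'; rewrite -ji js.
pose A' := [set p : (R * TPi)%type | q k0 (fun j => Y j p) != 0 /\ fs (fun j => Y j p) = 0].
have mA' : measurable A'.
  have -> : A' = (fun p => q k0 (fun j => Y j p)) @^-1` (~` [set 0]) `&`
                 (fun p => fs (fun j => Y j p)) @^-1` [set 0].
    by apply/seteqP; split => p /= [H1 H2]; split => //; apply/eqP.
  apply: measurableI.
    apply: mpre; last by apply: measurableC; exact: measurable_set1.
    apply: (@PolL_measurable R I _ _ Y _ _ (Hq k0)) => j js; apply: mY.
    by rewrite in_cons js orbT.
  apply: mpre; last exact: measurable_set1.
  exact: (@PolL_measurable R I _ _ Y _ _ Pfs).
have E1 : [set w | q k0 (fun j => X j w) != 0 /\
             \sum_(k < m) q k (fun j => X j w) * X i w ^+ k = 0] = psi @^-1` A'.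
  have YX w : (fun j => Y j (psi w)) = (fun j => X j w).
    by apply/funext => j; rewrite /Y /=; case: eqP => // ->.
  by apply/seteqP; split => w; rewrite /preimage /A' /mkset YX.
rewrite E1.
change (distribution P psi A' = 0%E).
rewrite law //.
rewrite /product_measure2 /=.
apply: integral0_eq => w _ /=.
have [H0|H0] := eqVneq (q k0 (fun j => X j w)) 0.
  have -> : ysection A' w = set0.
    apply/seteqP; split => z //; rewrite /ysection /= inE /A' /= q_loc /= H0.
    by case; rewrite eqxx.
  exact: measure0.
pose Q := \poly_(k < m) q k (fun j => X j w).
have Q0 : Q != 0.
  apply/eqP => Q0; have := congr1 (fun p : {poly R} => p`_k0) Q0.
  by rewrite coef_poly ltn_ord coef0 => /eqP; rewrite (negbTE H0).
apply/eqP; rewrite eq_le measure_ge0 andbT.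
rewrite -(roots_null nsi Q0).
apply: le_measure; rewrite ?inE.
- exact: measurable_ysection.
- exact: measurable_roots.
move=> z; rewrite /ysection /= inE /A' /= => -[_ Hz].
rewrite horner_poly -[RHS]Hz /fs /Y eqxx /=.
apply: eq_bigr => k _; congr (_ * _).
exact/esym/(q_loc k (z, w)).
Qed.

End Key2.
Section Zero.
Variables (R : realType) (I : finType) (d : measure_display) (T : measurableType d)
  (P : probability T R) (X : I -> {RV P >-> R}).
Hypothesis indep : mutually_independent X.
Hypothesis ns : forall i, non_singular (X i).

Let mXf s f : PolL s f -> measurable_fun setT (fun w => f (fun j => X j w)).
Proof.
move=> Pf; apply: (@PolL_measurable R I _ _ (fun j w => X j w) _ _ Pf) => j _.
exact: measurable_funPT.
Qed.

Lemma PolL_zero s f : uniq s -> PolL s f -> (exists x, f x != 0) ->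
  P [set w | f (fun j => X j w) = 0] = 0%E.
Proof.
elim: s f => [|i s IH] f /=.
  move=> _ [c Hc] [x fx].
  have -> : [set w | f (fun j => X j w) = 0] = set0.
    apply/seteqP; split => w //=; rewrite Hc => c0.
    by move: fx; rewrite Hc c0 eqxx.
  exact: measure0.
move=> /andP [is' us] [m [q [Hq Ef]]] [x0 fx0].
have [k0 Hk0] : exists k0 : 'I_m, q k0 x0 != 0.
  case: (pselect (exists k0 : 'I_m, q k0 x0 != 0)) => // Hn; exfalso.
  move: fx0; rewrite Ef big1 ?eqxx // => k _.
  case: (eqVneq (q k x0) 0) => [->|H]; first by rewrite mul0r.
  by exfalso; apply: Hn; exists k.
have Z1 : P [set w | q k0 (fun j => X j w) = 0] = 0%E.
  exact: (IH _ us (Hq k0) (ex_intro _ x0 Hk0)).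
have Z2 := @key R I d T P X indep i s is' (ns i) m q k0 Hq.
have PF : PolL (i :: s) f by exists m, q.
have mS1 : measurable [set w | q k0 (fun j => X j w) = 0].
  exact: (mpre (mXf (Hq k0)) (measurable_set1 0)).
have mS2 : measurable [set w | q k0 (fun j => X j w) != 0 /\
             \sum_(k < m) q k (fun j => X j w) * X i w ^+ k = 0].
  have -> : [set w | q k0 (fun j => X j w) != 0 /\
             \sum_(k < m) q k (fun j => X j w) * X i w ^+ k = 0] =
     (fun w => q k0 (fun j => X j w)) @^-1` (~` [set 0]) `&`
     (fun w => f (fun j => X j w)) @^-1` [set 0].
    by apply/seteqP; split => w /=; rewrite Ef => -[H1 H2]; split => //; apply/eqP.
  apply: measurableI; apply: mpre.
  - exact: mXf (Hq k0).
  - by apply: measurableC; exact: measurable_set1.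
  - exact: mXf PF.
  - exact: measurable_set1.
apply/eqP; rewrite eq_le measure_ge0 andbT.
apply: (@le_trans _ _ (P ([set w | q k0 (fun j => X j w) = 0] `|`
   [set w | q k0 (fun j => X j w) != 0 /\
             \sum_(k < m) q k (fun j => X j w) * X i w ^+ k = 0]))).
  apply: le_measure; rewrite ?inE.
  - exact: (mpre (mXf PF) (measurable_set1 0)).
  - exact: measurableU.
  move=> w /=; rewrite Ef => H.
  by case: (eqVneq (q k0 (fun j => X j w)) 0) => [H0|H0]; [left|right].
move: Z1 Z2 mS1 mS2.
set S1 := [set w | q k0 (fun j => X j w) = 0].
set S2 := [set w | q k0 (fun j => X j w) != 0 /\ _].
move=> Z1 Z2 mS1 mS2.
apply: (@le_trans _ _ (P S1 + P S2)%E).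
  exact: (measureU2 P mS1 mS2).
by rewrite Z1 Z2 adde0.
Qed.

End Zero.
From mathcomp Require Import fingroup perm.
Section Alg.
Variable (R : realType).
Local Notation toC := (real_complex R).

Lemma iter_map_mx (N : nat) (A : 'M[R]_N) (C : 'cV[R]_N) j :
  iter j (mulmx (map_mx toC A)) (map_mx toC C) = map_mx toC (iter j (mulmx A) C).
Proof. by elim: j => //= j ->; rewrite map_mxM. Qed.

Lemma sum_size_le (K : nzRingType) (p : {poly K}) (N : nat) (G : nat -> K) :
  (size p <= N)%N -> \sum_(j < size p) p`_j * G j = \sum_(j < N) p`_j * G j.
Proof.
move=> H; rewrite (big_ord_widen N (fun j => p`_j * G j) H) big_mkcond /=.
apply: eq_bigr => j _; case: ifP => // /negbT; rewrite -leqNgt => Hj.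
by rewrite nth_default ?mul0r.
Qed.

Definition krylov (N : nat) (A : 'M[R]_N) (C : 'cV[R]_N) : 'M[R]_N :=
  \matrix_(i < N, j < N) (iter j (mulmx A) C) i ord0.

Lemma det_factor (N : nat) (p : 'I_N -> {poly R[i]}) (A : 'M[R]_N) (C : 'cV[R]_N) :
  (forall k, (size (p k) <= N)%N) ->
  \det (\matrix_(i < N, k < N) (poly_mx_vec (p k) (map_mx toC A) (map_mx toC C)) i ord0)
  = toC (\det (krylov A C)) * \det (\matrix_(j < N, k < N) (p k)`_j).
Proof.
move=> Hs; rewrite -det_map_mx -det_mulmx; congr (\det _).
apply/matrixP => i k; rewrite !mxE /poly_mx_vec summxE.
rewrite (eq_bigr (fun j : 'I_(size (p k)) => (p k)`_j * (iter j (mulmx (map_mx toC A)) (map_mx toC C)) i ord0)); last first.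
  by move=> j _; rewrite mxE.
rewrite (@sum_size_le _ (p k) N (fun j => (iter j (mulmx (map_mx toC A)) (map_mx toC C)) i ord0)) //.
apply: eq_bigr => j _; rewrite !mxE iter_map_mx mxE mulrC.
by [].
Qed.

Lemma detMp_neq0 (N : nat) (p : 'I_N -> {poly R[i]}) :
  poly_lin_indep p -> (forall k, (size (p k) <= N)%N) ->
  \det (\matrix_(j < N, k < N) (p k)`_j) != 0.
Proof.
move=> Hlin Hs; rewrite -det_tr; apply/det0P => -[v v0 Hv].
apply/negP: v0; rewrite negbK; apply/eqP/rowP => k; rewrite mxE.
suff Hc : forall k, v ord0 k = 0 by exact: Hc.
apply: Hlin; apply/polyP => j; rewrite coef0 coef_sum.
rewrite (eq_bigr (fun k => v ord0 k * (p k)`_j)); last by move=> l _; rewrite coefZ.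
have [jN|jN] := ltnP j N.
  have := congr1 (fun M : 'M[R[i]]_(1, N) => M ord0 (Ordinal jN)) Hv; rewrite !mxE => H.
  by rewrite -[RHS]H; apply: eq_bigr => l _; rewrite !mxE.
by apply: big1 => l _; rewrite nth_default ?mulr0 // (leq_trans (Hs l)).
Qed.

End Alg.
Section MainSec.
Variables (R : realType) (N : nat).
Local Notation I := ('I_N * 'I_N + 'I_N)%type.

Definition Ar (x : I -> R) : 'M[R]_N := \matrix_(a, b) x (inl (a, b)).
Definition Cr (x : I -> R) : 'cV[R]_N := \col_a x (inr a).
Definition fdet (x : I -> R) := \det (krylov (Ar x) (Cr x)).

Lemma memI (k : I) : k \in index_enum I. Proof. exact: mem_index_enum. Qed.

Lemma PolL_iter j (a : 'I_N) :
  PolL (index_enum I) (fun x => (iter j (mulmx (Ar x)) (Cr x)) a ord0).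
Proof.
elim: j a => [|j IH] a /=.
  apply: (PolL_ext (PolL_var R (memI (inr a)))) => x.
  by rewrite mxE.
have H1 : forall l : 'I_N, PolL (index_enum I)
    (fun x => Ar x a l * (iter j (mulmx (Ar x)) (Cr x)) l ord0).
  move=> l; apply: (@PolL_mul R I (index_enum I) (fun x => Ar x a l)
     (fun x => (iter j (mulmx (Ar x)) (Cr x)) l ord0)); last exact: IH.
  apply: (PolL_ext (PolL_var R (memI (inl (a, l))))) => x.
  by rewrite mxE.
apply: (PolL_ext (PolL_sum (index_enum 'I_N) xpredT H1)).
by move=> x; rewrite mxE.
Qed.

Lemma PolL_fdet : PolL (index_enum I) fdet.
Proof.
have H1 : forall s : {perm 'I_N}, PolL (index_enum I)
    (fun x => (-1) ^+ s * \prod_i krylov (Ar x) (Cr x) i (s i)).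
  move=> s; apply: (@PolL_mul R I (index_enum I) (fun _ => (-1) ^+ s)
     (fun x => \prod_i krylov (Ar x) (Cr x) i (s i))); first exact: PolL_cst.
  have H2 : forall i : 'I_N, PolL (index_enum I) (fun x => krylov (Ar x) (Cr x) i (s i)).
    by move=> i; apply: (PolL_ext (PolL_iter (s i) i)) => x; rewrite mxE.
  exact: (PolL_prod (index_enum 'I_N) xpredT H2).
apply: (PolL_ext (PolL_sum (index_enum {perm 'I_N}) xpredT H1)).
by [].
Qed.

Definition x0 (k : I) : R :=
  match k with inl (a, b) => ((a : nat) == b.+1)%:R | inr a => ((a : nat) == 0%N)%:R end.

Lemma iter_x0 n (a : 'I_N) : (iter n (mulmx (Ar x0)) (Cr x0)) a ord0 = ((a : nat) == n)%:R.
Proof.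
elim: n a => [|n IH] a /=; first by rewrite mxE.
rewrite mxE; under eq_bigr do rewrite IH mxE.
rewrite /x0 /=.
case: (eqVneq (a : nat) n.+1) => Ha.
  have nN : (n < N)%N by move: (ltn_ord a); rewrite Ha; apply: ltnW.
  rewrite (bigD1 (Ordinal nN)) //= Ha !eqxx mulr1 big1 ?addr0 // => l Hl.
  have : (l : nat) != n by apply: contraNneq Hl => E; apply/eqP/val_inj.
  by move/negbTE ->; rewrite mulr0.
rewrite big1 // => l _.
case: eqP => [E1|_]; last by rewrite mul0r.
case: eqP => [E2|_]; last by rewrite mulr0.
by move: Ha; rewrite E1 E2 eqxx.
Qed.

Lemma fdet_x0 : fdet x0 = 1.
Proof.
rewrite /fdet; have -> : krylov (Ar x0) (Cr x0) = 1%:M.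
  by apply/matrixP => a b; rewrite !mxE iter_x0.
exact: det1.
Qed.

End MainSec.
Theorem mainTheorem11 (d : measure_display) (T : measurableType d) (R : realType)
  (P : probability T R) (N : nat)
  (A : 'I_N * 'I_N -> {RV P >-> R}) (C : 'I_N -> {RV P >-> R})
  (p : 'I_N -> {poly R[i]}) :
  mutually_independent (fun k : ('I_N * 'I_N + 'I_N)%type =>
    match k with inl ij => A ij | inr i => C i end) ->
  (forall ij, non_singular (A ij)) ->
  (forall i, non_singular (C i)) ->
  poly_lin_indep p ->
  (forall k, (size (p k) <= N)%N) ->
  P [set w | \det (\matrix_(i < N, k < N)
         (poly_mx_vec (p k)
            (\matrix_(a < N, b < N) ((A (a, b) w)%:C)%C)
            (\col_(a < N) ((C a w)%:C)%C)) i ord0) = 0] = 0%E.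
Proof.
move=> Hind HA HC Hlin Hs.
set X := (fun k : ('I_N * 'I_N + 'I_N)%type =>
    match k with inl ij => A ij | inr i => C i end) in Hind.
have ns : forall k, non_singular (X k) by case.
have -> : [set w | \det (\matrix_(i < N, k < N)
         (poly_mx_vec (p k)
            (\matrix_(a < N, b < N) ((A (a, b) w)%:C)%C)
            (\col_(a < N) ((C a w)%:C)%C)) i ord0) = 0] =
     [set w | fdet (fun k => X k w) = 0].
  apply/seteqP; split => w /=.
    have EA : \matrix_(a < N, b < N) ((A (a, b) w)%:C)%C =
        map_mx (real_complex R) (Ar (fun k => X k w)) by apply/matrixP => a b; rewrite !mxE.
    have EC : \col_(a < N) ((C a w)%:C)%C =
        map_mx (real_complex R) (Cr (fun k => X k w)) by apply/matrixP => a b; rewrite !mxE.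
    rewrite EA EC det_factor // => /eqP; rewrite mulf_eq0 (negbTE (detMp_neq0 Hlin Hs)) orbF.
    by rewrite fmorph_eq0 => /eqP.
  have EA : \matrix_(a < N, b < N) ((A (a, b) w)%:C)%C =
      map_mx (real_complex R) (Ar (fun k => X k w)) by apply/matrixP => a b; rewrite !mxE.
  have EC : \col_(a < N) ((C a w)%:C)%C =
      map_mx (real_complex R) (Cr (fun k => X k w)) by apply/matrixP => a b; rewrite !mxE.
  by rewrite EA EC det_factor // /fdet => ->; rewrite rmorph0 mul0r.
apply: (PolL_zero Hind ns (index_enum_uniq _) (@PolL_fdet R N)).
by exists (@x0 R N); rewrite fdet_x0 oner_neq0.
Qed.
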